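(* In the model described in the context, suppose $\triangle C>0$, and let $X(0)$ be the set of symmetric Stackelberg equilibria. Let $\zeta_1=(M+1)\triangle C+\min\big(MN\triangle C,\ MNk+2M\sqrt{Nk\triangle C}\big)$. Then there exists $x\in X(0)$ with $y_j(\mathbf0,x\mathbf1)=0$ if and only if $\alpha_x\le\zeta_1$. Furthermore, such an $x$ is given by \[x=\begin{cases}\frac1{M+1}\alpha_x,&\text{if }0\le\alpha_x<(M+1)\triangle C,\\ \frac1M(\alpha_x-\triangle C),&\text{if }(M+1)\triangle C\le\alpha_x\le\zeta_1.\end{cases}\]
   Context: Model: $M\ge1$ leaders and $N\ge2$ followers; inverse demand $P(q)=\alpha-\beta q$, $\alpha,\beta>0$; leader marginal cost $C$, follower marginal cost $c$, $c\ge C>0$; follower capacity $k>0$. Leader $i$ produces $x_i\ge0$; follower $j$ has forward position $f_j\in\mathbb{R}$ and chooses spot production $y_j\in[0,k]$. Given $\mathbf f,\mathbf x$, the spot market is the game among followers where follower $j$ chooses $y_j\in[0,k]$ to maximize $P(\sum_ix_i+\sum_{j'}y_{j'})(y_j-f_j)-cy_j$; its unique Nash equilibrium is $\mathbf y(\mathbf f,\mathbf x)=(y_1(\mathbf f,\mathbf x),\dots,y_N(\mathbf f,\mathbf x))$. Leader $i$'s payoff is $\psi_i=(P(\sum_ix_i+\sum_{j'}y_{j'}(\mathbf f,\mathbf x))-C)x_i$; $\psi_i(\bar x;x\mathbf1,\mathbf f)$ denotes this payoff when leader $i$ produces $\bar x$ and all other leaders produce $x$. $X(0)=\{x\in\mathbb{R}_+:\psi_i(x;x\mathbf1,\mathbf0)\ge\psi_i(\bar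 x;x\mathbf1,\mathbf0)\ \forall\bar x\in\mathbb{R}_+,\ \forall i\}$. $\alpha_x=(\alpha-C)/\beta$, $\triangle C=(c-C)/\beta$. *)

(* Defs.v *)
From HB Require Import structures.
From mathcomp Require Import all_boot all_order all_algebra.
Set Implicit Arguments. Unset Strict Implicit. Unset Printing Implicit Defensive.
Import Order.TTheory GRing.Theory Num.Theory.
Local Open Scope ring_scope.

Definition cst (R : rcfType) (n : nat) (x : R) : 'I_n -> R := fun _ => x.
Arguments cst {R} n x.

Section Model.
Variable R : rcfType.

Definition price (alpha beta q : R) : R := alpha - beta * q.

Definition total (M N : nat) (x : 'I_M -> R) (y : 'I_N -> R) : R :=
  \sum_(i < M) x i + \sum_(j < N) y j.

Definition upd (n : nat) (v : 'I_n -> R) (j : 'I_n) (z : R) : 'I_n -> R :=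
  fun j' => if j' == j then z else v j'.

Definition follower_payoff (alpha beta c : R) (M N : nat) (f : 'I_N -> R)
    (x : 'I_M -> R) (y : 'I_N -> R) (j : 'I_N) : R :=
  price alpha beta (total x y) * (y j - f j) - c * y j.

Definition spot_NE (alpha beta c k : R) (M N : nat) (f : 'I_N -> R)
    (x : 'I_M -> R) (y : 'I_N -> R) : Prop :=
  (forall j, 0 <= y j <= k) /\
  (forall j (z : R), 0 <= z <= k ->
     follower_payoff alpha beta c f x (upd y j z) j
       <= follower_payoff alpha beta c f x y j).


Definition leader_payoff (alpha beta C : R) (M N : nat)
    (ysol : ('I_N -> R) -> ('I_M -> R) -> ('I_N -> R))
    (f : 'I_N -> R) (x : 'I_M -> R) (i : 'I_M) : R :=
  (price alpha beta (total x (ysol f x)) - C) * x i.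

(* x \in X(0): symmetric Stackelberg equilibria with zero forward positions *)
Definition inX0 (alpha beta C : R) (M N : nat)
    (ysol : ('I_N -> R) -> ('I_M -> R) -> ('I_N -> R)) (x : R) : Prop :=
  0 <= x /\
  forall (xbar : R) (i : 'I_M), 0 <= xbar ->
    leader_payoff alpha beta C ysol (cst N 0) (upd (cst M x) i xbar) i
      <= leader_payoff alpha beta C ysol (cst N 0) (cst M x) i.

End Model.

(* Main.v *)
Require Import Defs.
From HB Require Import structures.
From mathcomp Require Import all_boot all_order all_algebra.
From mathcomp Require Import ring lra.
Import Order.TTheory GRing.Theory Num.Theory.
Local Open Scope ring_scope.

Definition Tspec {R : rcfType} (n k t T : R) : Prop :=
  (T <= 0 -> T = t) /\ (k <= T -> T + n * k = t) /\ (0 <= T <= k -> T + n * T = t).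

Lemma Tspec_le {R : rcfType} {n k t T : R} : 0 <= n -> 0 < k -> Tspec n k t T -> T <= t.
Proof.
move=> hn hk [h1 [h2 h3]].
case: (lerP T 0) => a; first by rewrite (h1 a).
case: (lerP k T) => b; first by rewrite -(h2 b); nra.
rewrite -h3; [nra | apply/andP; split; lra].
Qed.

Lemma Tspec_neg {R : rcfType} (n k t T : R) : 0 <= n -> 0 < k -> t <= 0 -> Tspec n k t T -> T = t.
Proof.
move=> hn hk ht hs; have h := Tspec_le hn hk hs.
by case: hs => h1 _; apply: h1; lra.
Qed.

Lemma Tspec_mid {R : rcfType} (n k t T : R) : 0 <= n -> 0 < k -> 0 < t <= k ->
  Tspec n k ((n+1)*t) T -> T = t.
Proof.
move=> hn hk /andP[t0 tk] [h1 [h2 h3]].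
case: (lerP T 0) => a; first by have := h1 a; nra.
case: (lerP k T) => b; first by have := h2 b; nra.
have := h3 (ltac:(apply/andP; split; lra)); nra.
Qed.

Lemma Tspec_high {R : rcfType} (n k t T : R) : 0 <= n -> 0 < k -> k <= t ->
  Tspec n k (t + n*k) T -> T = t.
Proof.
move=> hn hk tk [h1 [h2 h3]].
case: (lerP T 0) => a; first by have := h1 a; nra.
case: (lerP k T) => b; first by have := h2 b; nra.
have := h3 (ltac:(apply/andP; split; lra)); nra.
Qed.

Lemma core3 {R : rcfType} (n k D x xb T r : R) : 1 <= n -> 0 < k -> 0 < D ->
  D <= x -> x <= (n+1)*D -> x <= D + n*k + 2*r -> r ^+ 2 = n*k*D -> 0 <= r ->
  0 <= xb -> Tspec n k (x - xb) T -> (T + D) * xb <= D * x.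
Proof.
move=> hn hk hD hx1 hx2 hx3 hr r0 hxb [s1 [s2 s3]].
case: (lerP T 0) => a.
  have e := s1 a. have u1 : 0 <= xb - D by lra. have u2 : x - xb <= 0 by lra.
  have := mulr_ge0_le0 u1 u2. rewrite e.
  have -> : (x - xb + D) * xb = D * x + (xb - D) * (x - xb) by ring.
  lra.
case: (lerP k T) => b.
  have e := s2 b.
  have eT : T + D = (x + D - n*k) - xb by lra.
  rewrite eT.
  have Dx0 : 0 <= D * x by apply: mulr_ge0; lra.
  case: (lerP (x + D - n*k) 0) => hq.
    have : ((x + D - n*k) - xb) * xb <= 0 by apply: mulr_le0_ge0; lra.
    lra.
  have hd2 : (x - D - n * k) ^+ 2 <= 4 * (n * k * D).
    case: (lerP 0 (x - D - n * k)) => hd.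
      have h0 : 0 <= 2 * r - (x - D - n * k) by lra.
      have h1 : 0 <= 2 * r + (x - D - n * k) by lra.
      have := mulr_ge0 h0 h1. rewrite -hr.
      have -> : (2 * r - (x - D - n * k)) * (2 * r + (x - D - n * k)) = 4 * r ^+ 2 - (x - D - n * k) ^+ 2 by ring.
      lra.
    have h0 : 0 <= 2 * D + (x - D - n * k) by lra.
    have h1 : 0 <= n * k + (x - D - n * k) by lra.
    have h2 : 0 <= D * (n * k) by apply: mulr_ge0; nra.
    have h4 : 0 <= - (x - D - n * k) by lra.
    have g1 := mulr_ge0 h4 h0.
    have g2 : 0 <= D * (n * k + (x - D - n * k)) by apply: mulr_ge0; lra.
    have -> : (x - D - n * k) ^+ 2 = - (- (x - D - n * k) * (2 * D + (x - D - n * k)))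
        - 2 * (D * (n * k + (x - D - n * k))) + 2 * (D * (n * k)) by ring.
    have -> : 4 * (n * k * D) = 4 * (D * (n * k)) by ring.
    lra.
  have hs := sqr_ge0 ((x + D - n*k) - 2 * xb).
  have E1 : ((x + D - n*k) - 2 * xb) ^+ 2 = (x + D - n*k) ^+ 2 - 4 * (((x + D - n*k) - xb) * xb) by ring.
  have E2 : 4 * (D * x) - (x + D - n*k) ^+ 2 = 4 * (n * k * D) - (x - D - n * k) ^+ 2 by ring.
  lra.
have e := s3 (ltac:(apply/andP; split; lra)).
have eT : T = (x - xb) / (n + 1).
  rewrite -e; field; lra.
have u1 : 0 <= x - xb by nra.
have u2 : xb - (n+1)*D <= 0 by lra.
have := mulr_ge0_le0 u1 u2.
have -> : (T + D) * xb = D * x + (x - xb) * (xb - (n+1)*D) / (n + 1).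
  rewrite eT; field; lra.
move=> h; suff : (x - xb) * (xb - (n + 1) * D) / (n + 1) <= 0 by lra.
apply: mulr_le0_ge0 => //; rewrite invr_ge0; lra.
Qed.

Lemma core_nec {R : rcfType} (n m k D a x T0 r : R) : 1 <= n -> 1 <= m -> 0 < k -> 0 < D ->
  0 <= x -> r ^+ 2 = n * k * D -> 0 <= r ->
  T0 = a - m * x -> T0 <= 0 ->
  (forall xb, 0 <= xb -> exists T, Tspec n k (a - (m - 1) * x - xb) T /\
        (T + D) * xb <= (T0 + D) * x) ->
  a + D <= (m + 1) * D + Num.min (m * n * D) (m * n * k + 2 * m * r).
Proof.
move=> hn hm hk hD hx hr r0 eT0 hT0 dev.
have hmin : 0 <= Num.min (m * n * D) (m * n * k + 2 * m * r).
  rewrite le_min; apply/andP; split.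
    by apply: mulr_ge0; [apply: mulr_ge0|]; lra.
  have : 0 <= m * n * k by apply: mulr_ge0; [apply: mulr_ge0|]; lra.
  have : 0 <= m * r by apply: mulr_ge0; lra.
  lra.
case: (lerP a (m * D)) => ha; first lra.
have xD : D < x.
  have : m * D < m * x by lra.
  rewrite ltr_pM2l //; lra.
have eb : a = m * x.
  case: (lerP (m * x) a) => hb; first lra.
  exfalso.
  set b := a - (m - 1) * x.
  have bx : b < x by rewrite /b; lra.
  case: (lerP 0 b) => b0.
    have [T [hs hT]] := dev b b0.
    have : T = 0.
      apply: (@Tspec_neg _ n k); [lra|lra|lra|].
      by move: hs; rewrite /b subrr.
    move=> e; rewrite e eT0 in hT.
    have : 0 < (x - b) * (x - D) by apply: mulr_gt0; lra.
    have E : (0 + D) * b - (a - m * x + D) * x = (x - b) * (x - D).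
      rewrite /b; ring.
    lra.
  have [T [hs hT]] := dev 0 (lexx 0).
  rewrite mulr0 eT0 in hT.
  have : 0 < (- (a - m * x + D)) * x.
    apply: mulr_gt0; [rewrite /b in b0; lra | lra].
  rewrite mulNr; lra.
have s2 : x <= (n + 1) * D.
  case: (lerP x ((n + 1) * D)) => // hxn; exfalso.
  set e := (x - (n + 1) * D) / (2 * (n + 1)).
  have e0 : 0 < e by apply: divr_gt0; lra.
  have ee : (n + 1) * e = (x - (n + 1) * D) / 2 by rewrite /e; field; lra.
  have nD0 : 0 <= (n + 1) * D by apply: mulr_ge0; lra.
  have key : forall t, 0 < t <= k -> t <= e -> False.
    move=> t /andP[t0 tk] te.
    have xb0 : 0 <= x - (n + 1) * t.
      have : (n + 1) * t <= (n + 1) * e by rewrite ler_pM2l //; lra.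
      lra.
    have [T [hs hT]] := dev _ xb0.
    have : T = t.
      apply: (@Tspec_mid _ n k); [lra|lra|apply/andP; split; lra|].
      by move: hs; congr Tspec; rewrite eb; ring.
    move=> eTt; rewrite eTt eT0 eb subrr add0r in hT.
    have h1 : (n + 1) * t <= (n + 1) * e by rewrite ler_pM2l //; lra.
    have : 0 < t * (x - (n + 1) * D - (n + 1) * t) by apply: mulr_gt0; lra.
    have E : (t + D) * (x - (n + 1) * t) - D * x = t * (x - (n + 1) * D - (n + 1) * t) by ring.
    lra.
  case: (lerP e k) => ek.
    by apply: (key e) => //; apply/andP; split; lra.
  by apply: (key k) => //; [apply/andP; split; lra | lra].
have s3 : x <= D + n * k + 2 * r.
  case: (lerP x (D + n * k + 2 * r)) => // hxr; exfalso.
  set d := x - D - n * k.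
  have Dk : k < D.
    have : n * k < n * D by nra.
    rewrite ltr_pM2l //; lra.
  have rk : k <= r.
    case: (lerP k r) => // hrk; exfalso.
    have g1 : r * r <= r * k by apply: ler_wpM2l; lra.
    have g2 : r * k < k * k by rewrite ltr_pM2r //.
    have g3 : k * k <= k * D by rewrite ler_pM2l //; lra.
    have g4 : k * D <= n * (k * D) by rewrite ler_peMl //; apply: mulr_ge0; lra.
    have : r ^+ 2 = n * (k * D) by rewrite hr mulrA.
    rewrite expr2; lra.
  have xb0 : 0 <= d / 2 + D by rewrite /d; lra.
  have [T [hs hT]] := dev _ xb0.
  have : T = d / 2.
    apply: (@Tspec_high _ n k); [lra|lra|rewrite /d; lra|].
    by move: hs; congr Tspec; rewrite eb /d; field.
  move=> eTt; rewrite eTt eT0 eb subrr add0r in hT.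
  have : 0 < (d - 2 * r) * (d + 2 * r) by apply: mulr_gt0; rewrite /d; lra.
  have E1 : (d - 2 * r) * (d + 2 * r) = d ^+ 2 - 4 * (n * k * D) by rewrite -hr; ring.
  have E : (d / 2 + D) * (d / 2 + D) - D * x = (d ^+ 2 - 4 * (n * k * D)) / 4.
    by rewrite /d; field.
  rewrite E1 => h.
  have : 0 < (d ^+ 2 - 4 * (n * k * D)) / 4 by apply: divr_gt0.
  lra.
suff : m * x - m * D <= Num.min (m * n * D) (m * n * k + 2 * m * r) by rewrite eb; lra.
rewrite le_min; apply/andP; split.
  have : m * x <= m * ((n + 1) * D) by rewrite ler_pM2l //; lra.
  have -> : m * ((n + 1) * D) = m * n * D + m * D by ring. lra.
have : m * x <= m * (D + n * k + 2 * r) by rewrite ler_pM2l //; lra.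
have -> : m * (D + n * k + 2 * r) = m * D + m * n * k + 2 * m * r by ring. lra.
Qed.


Lemma sum_upd {R : rcfType} (n : nat) (v : 'I_n -> R) j z :
  \sum_(i < n) upd v j z i = \sum_(i < n) v i - v j + z.
Proof.
rewrite (bigD1 j) //= [in RHS](bigD1 j) //= /upd eqxx.
rewrite (eq_bigr (fun i => v i)); last by move=> i /negbTE ->.
ring.
Qed.

Lemma upd_eq {R : rcfType} (n : nat) (v : 'I_n -> R) j z : upd v j z j = z.
Proof. by rewrite /upd eqxx. Qed.

Lemma sum_cst {R : rcfType} (n : nat) (v : R) : \sum_(i < n) cst n v i = n%:R * v.
Proof. by rewrite /cst sumr_const card_ord mulr_natl. Qed.

Lemma spot_char {R : rcfType} (alpha beta c k : R) (M N : nat) (x : 'I_M -> R) y :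
  0 < beta -> spot_NE alpha beta c k (cst N 0) x y ->
  forall j : 'I_N, let T := (alpha - c) / beta - Defs.total x y in
  (T <= 0 -> y j = 0) /\ (k <= T -> y j = k) /\ (0 <= T <= k -> y j = T).
Proof.
move=> hb [hy hne] j T.
have key : forall z, 0 <= z <= k -> (z - y j) * (T - z) <= 0.
  move=> z hz; have := hne j z hz.
  rewrite /follower_payoff /Defs.total sum_upd upd_eq /cst /price.
  set S := \sum_(i < M) x i + \sum_(i < N) y i.
  have -> : \sum_(i < M) x i + (\sum_(i < N) y i - y j + z) = S - y j + z by rewrite /S; ring.
  have E : (alpha - beta * (S - y j + z)) * (z - 0) - c * z
        - ((alpha - beta * S) * (y j - 0) - c * y j) = beta * ((z - y j) * (T - z)).
    rewrite /T /Defs.total -/S; field; lra.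
  move=> h.
  have : beta * ((z - y j) * (T - z)) <= 0 by lra.
  by rewrite pmulr_rle0.
clearbody T.
have [y0 yk] := andP (hy j).
split; [|split].
- move=> hT; apply/eqP; rewrite eq_le y0 andbT; apply/negP => /negP; rewrite -ltNge => yp.
  have := key (y j / 2) (ltac:(apply/andP; split; lra)).
  have : 0 < (y j / 2) * (y j / 2 - T) by apply: mulr_gt0; lra.
  have -> : (y j / 2 - y j) * (T - y j / 2) = (y j / 2) * (y j / 2 - T) by field.
  lra.
- move=> hT; apply/eqP; rewrite eq_le yk /=; apply/negP => /negP; rewrite -ltNge => yp.
  have := key ((y j + k) / 2) (ltac:(apply/andP; split; lra)).
  have : 0 < ((y j + k) / 2 - y j) * (T - (y j + k) / 2) by apply: mulr_gt0; lra.
  lra.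
- move=> /andP[t0 tk].
  have := key ((y j + T) / 2) (ltac:(apply/andP; split; lra)).
  have -> : ((y j + T) / 2 - y j) * (T - (y j + T) / 2) = ((T - y j) / 2) ^+ 2 by rewrite expr2; field.
  move=> h; have h2 := sqr_ge0 ((T - y j) / 2).
  have : ((T - y j) / 2) ^+ 2 = 0 by lra.
  move/eqP; rewrite sqrf_eq0 mulf_eq0 invr_eq0 pnatr_eq0 orbF subr_eq0 => /eqP.
  by [].
Qed.

Definition Tv {R : rcfType} (alpha beta c : R) {M N : nat}
   (ysol : ('I_N -> R) -> ('I_M -> R) -> ('I_N -> R)) (xv : 'I_M -> R) : R :=
  (alpha - c) / beta - Defs.total xv (ysol (cst N 0) xv).

Lemma spot_T {R : rcfType} (alpha beta c k : R) (M N : nat) (x : 'I_M -> R) y :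
  0 < beta -> spot_NE alpha beta c k (cst N 0) x y ->
  Tspec N%:R k ((alpha - c) / beta - \sum_(i < M) x i) ((alpha - c) / beta - Defs.total x y).
Proof.
move=> hb hs; have ch := @spot_char _ alpha beta c k M N x y hb hs.
set T := (alpha - c) / beta - Defs.total x y.
have ET : (alpha - c) / beta - \sum_(i < M) x i = T + \sum_(j < N) y j by rewrite /T /Defs.total; ring.
rewrite ET; split; [|split].
- move=> h; rewrite big1 ?addr0 //; move=> j _; exact: (proj1 (ch j) h).
- move=> h; rewrite (eq_bigr (fun=> k)); last by move=> j _; exact: (proj1 (proj2 (ch j)) h).
  by rewrite sumr_const card_ord mulr_natl.
- move=> h; rewrite (eq_bigr (fun=> T)); last by move=> j _; exact: (proj2 (proj2 (ch j)) h).
  by rewrite sumr_const card_ord mulr_natl.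
Qed.

Lemma payoff_eq {R : rcfType} (alpha beta C c : R) (M N : nat) ysol (xv : 'I_M -> R) i :
  0 < beta ->
  leader_payoff alpha beta C ysol (cst N 0) xv i =
  beta * (Tv alpha beta c ysol xv + (c - C) / beta) * xv i.
Proof. move=> hb; rewrite /leader_payoff /Tv /price; field; lra. Qed.

Theorem lemma8 (R : rcfType) (M N : nat) (hM : (1 <= M)%N) (hN : (2 <= N)%N)
    (alpha beta C c k : R)
    (halpha : 0 < alpha) (hbeta : 0 < beta) (hC : 0 < C) (hcC : C <= c)
    (hk : 0 < k)
    (ysol : ('I_N -> R) -> ('I_M -> R) -> ('I_N -> R))
    (hysol : forall f x, spot_NE alpha beta c k f x (ysol f x))
    (hdC : 0 < (c - C) / beta) :
  let ax := (alpha - C) / beta in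
  let dC := (c - C) / beta in
  let zeta1 := (M%:R + 1) * dC
      + Num.min (M%:R * N%:R * dC)
                (M%:R * N%:R * k + 2 * M%:R * Num.sqrt (N%:R * k * dC)) in
  ((exists x : R, inX0 alpha beta C ysol x /\
       forall j, ysol (cst N 0) (cst M x) j = 0) <-> ax <= zeta1) /\
  (0 <= ax < (M%:R + 1) * dC ->
     let x := ax / (M%:R + 1) in
     inX0 alpha beta C ysol x /\ forall j, ysol (cst N 0) (cst M x) j = 0) /\
  ((M%:R + 1) * dC <= ax <= zeta1 ->
     let x := (ax - dC) / M%:R in
     inX0 alpha beta C ysol x /\ forall j, ysol (cst N 0) (cst M x) j = 0).
Proof.
move=> ax dC zeta1.
have bne : beta != 0 by rewrite gt_eqF.
have hn1 : 1 <= N%:R :> R by rewrite ler1n; apply: ltnW.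
have hm1 : 1 <= M%:R :> R by rewrite ler1n.
have hn0 : 0 <= N%:R :> R by lra.
have mne : M%:R != 0 :> R by rewrite gt_eqF //; lra.
have i0 : 'I_M := Ordinal hM.
have j0 : 'I_N := Ordinal (ltnW hN).
set a := (alpha - c) / beta.
have ea : a = ax - dC by rewrite /a /ax /dC; field.
have hD : 0 < dC by [].
have nkD0 : 0 <= N%:R * k * dC by apply: mulr_ge0; [apply: mulr_ge0|]; lra.
have hr : Num.sqrt (N%:R * k * dC) ^+ 2 = N%:R * k * dC by rewrite sqr_sqrtr.
have r0 : 0 <= Num.sqrt (N%:R * k * dC) by apply: sqrtr_ge0.
have Tdev : forall x xb i, Tspec N%:R k (a - (M%:R - 1) * x - xb)
    (Tv alpha beta c ysol (upd (cst M x) i xb)).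
  move=> x xb i; have := @spot_T _ alpha beta c k M N _ _ hbeta (hysol (cst N 0) (upd (cst M x) i xb)).
  rewrite sum_upd sum_cst /cst.
  have -> : (alpha - c) / beta - (M%:R * x - x + xb) = a - (M%:R - 1) * x - xb by rewrite /a; ring.
  by [].
have Teq : forall x, Tspec N%:R k (a - M%:R * x) (Tv alpha beta c ysol (cst M x)).
  move=> x; have := @spot_T _ alpha beta c k M N _ _ hbeta (hysol (cst N 0) (cst M x)).
  by rewrite sum_cst.
have toX0 : forall x, 0 <= x ->
    (forall xb i, 0 <= xb -> (Tv alpha beta c ysol (upd (cst M x) i xb) + dC) * xb
        <= (Tv alpha beta c ysol (cst M x) + dC) * x) -> inX0 alpha beta C ysol x.
  move=> x hx h; split => // xb i hxb.
  rewrite !(payoff_eq _ _ _ c) // upd_eq {3}/cst -!mulrA ler_pM2l //.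
  exact: h.
have ofX0 : forall x, inX0 alpha beta C ysol x ->
    (forall xb i, 0 <= xb -> (Tv alpha beta c ysol (upd (cst M x) i xb) + dC) * xb
        <= (Tv alpha beta c ysol (cst M x) + dC) * x).
  move=> x [hx h] xb i hxb; have := h xb i hxb.
  by rewrite !(payoff_eq _ _ _ c) // upd_eq {3}/cst -!mulrA ler_pM2l.
have fol : forall x, Tv alpha beta c ysol (cst M x) <= 0 ->
    forall j, ysol (cst N 0) (cst M x) j = 0.
  move=> x hT j.
  exact: (proj1 (@spot_char _ alpha beta c k M N _ _ hbeta (hysol (cst N 0) (cst M x)) j) hT).
have fol2 : forall x, (forall j, ysol (cst N 0) (cst M x) j = 0) ->
    Tv alpha beta c ysol (cst M x) <= 0.
  move=> x hy; case: (lerP (Tv alpha beta c ysol (cst M x)) 0) => // hT; exfalso.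
  have [_ [c2 c3]] := @spot_char _ alpha beta c k M N _ _ hbeta (hysol (cst N 0) (cst M x)) j0.
  rewrite -/(Tv alpha beta c ysol (cst M x)) in c2 c3.
  have := hy j0.
  case: (lerP k (Tv alpha beta c ysol (cst M x))) => hk2.
    by rewrite (c2 hk2); lra.
  by rewrite c3 ?(ltW hT) ?(ltW hk2) //; lra.
have P2 : 0 <= ax < (M%:R + 1) * dC ->
     let x := ax / (M%:R + 1) in
     inX0 alpha beta C ysol x /\ forall j, ysol (cst N 0) (cst M x) j = 0.
  move=> /andP[h1 h2] x.
  have ex : ax = (M%:R + 1) * x by rewrite /x; field; lra.
  have xD : x < dC.
    by move: h2; rewrite ex ltr_pM2l //; lra.
  have x0 : 0 <= x by rewrite /x divr_ge0 //; lra.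
  have T0 : Tv alpha beta c ysol (cst M x) = x - dC.
    have := @Tspec_neg _ N%:R k (a - M%:R * x) _ ltac:(lra) hk ltac:(rewrite ea ex; lra) (Teq x).
    by move=> ->; rewrite ea ex; ring.
  split; last by apply: fol; lra.
  apply: toX0 => // xb i hxb.
  have := Tspec_le hn0 hk (Tdev x xb i).
  rewrite T0 => hT.
  have : (Tv alpha beta c ysol (upd (cst M x) i xb) + dC) * xb <= (2 * x - xb) * xb.
    apply: ler_wpM2r => //; move: hT; rewrite ea ex; lra.
  have := sqr_ge0 (x - xb).
  have -> : (x - xb) ^+ 2 = (x - dC + dC) * x - (2 * x - xb) * xb by ring.
  lra.
have P3 : (M%:R + 1) * dC <= ax <= zeta1 ->
     let x := (ax - dC) / M%:R in
     inX0 alpha beta C ysol x /\ forall j, ysol (cst N 0) (cst M x) j = 0.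
  move=> /andP[h1 h2] x.
  have ex : ax = M%:R * x + dC by rewrite /x; field.
  have xD : dC <= x.
    have : M%:R * dC <= M%:R * x by lra.
    by rewrite ler_pM2l //; lra.
  have T0 : Tv alpha beta c ysol (cst M x) = 0.
    have := @Tspec_neg _ N%:R k (a - M%:R * x) _ ltac:(lra) hk ltac:(rewrite ea ex; lra) (Teq x).
    by move=> ->; rewrite ea ex; ring.
  move: h2; rewrite /zeta1 => h2.
  set mn := Num.min _ _ in h2.
  have m1 : mn <= M%:R * N%:R * dC by rewrite ge_min lexx.
  have m2 : mn <= M%:R * N%:R * k + 2 * M%:R * Num.sqrt (N%:R * k * dC) by rewrite ge_min lexx orbT.
  have b1 : x <= (N%:R + 1) * dC.
    have : M%:R * x <= M%:R * ((N%:R + 1) * dC).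
      have -> : M%:R * ((N%:R + 1) * dC) = M%:R * N%:R * dC + M%:R * dC by ring. lra.
    by rewrite ler_pM2l //; lra.
  have b2 : x <= dC + N%:R * k + 2 * Num.sqrt (N%:R * k * dC).
    have : M%:R * x <= M%:R * (dC + N%:R * k + 2 * Num.sqrt (N%:R * k * dC)).
      have -> : M%:R * (dC + N%:R * k + 2 * Num.sqrt (N%:R * k * dC)) =
        M%:R * dC + (M%:R * N%:R * k + 2 * M%:R * Num.sqrt (N%:R * k * dC)) by ring. lra.
    by rewrite ler_pM2l //; lra.
  split; last by apply: fol; lra.
  apply: toX0; first lra.
  move=> xb i hxb; rewrite T0 add0r.
  apply: (@core3 _ N%:R k dC x xb _ (Num.sqrt (N%:R * k * dC)) hn1 hk hD xD b1 b2 hr r0 hxb).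
  have := Tdev x xb i.
  have -> : a - (M%:R - 1) * x - xb = x - xb by rewrite ea ex; ring.
  by [].
split; last by split.
split.
  move=> [x [hx hy]].
  have hT := fol2 x hy.
  have eT0 : Tv alpha beta c ysol (cst M x) = a - M%:R * x by case: (Teq x) => e _; exact: e.
  have := @core_nec _ N%:R M%:R k dC a x _ _ hn1 hm1 hk hD (proj1 hx) hr r0 eT0 hT.
  have eax : ax = a + dC by rewrite ea; ring.
  rewrite /zeta1 eax; apply.
  + move=> xb hxb; exists (Tv alpha beta c ysol (upd (cst M x) i0 xb)); split.
      exact: Tdev.
    exact: ofX0.
move=> hA.
case: (lerP 0 ax) => hA0.
  case: (lerP ((M%:R + 1) * dC) ax) => hA1.
    have [h1 h2] := P3 ltac:(apply/andP; split => //).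
    by exists ((ax - dC) / M%:R).
  have [h1 h2] := P2 ltac:(apply/andP; split => //).
  by exists (ax / (M%:R + 1)).
exists 0.
have T0 : Tv alpha beta c ysol (cst M 0) = a.
  have := @Tspec_neg _ N%:R k (a - M%:R * 0) _ ltac:(lra) hk ltac:(rewrite ea mulr0 subr0; lra) (Teq 0).
  by move=> ->; rewrite mulr0 subr0.
split; last by apply: fol; rewrite T0 ea; lra.
apply: toX0 => // xb i hxb.
have := Tspec_le hn0 hk (Tdev 0 xb i).
rewrite mulr0 subr0 => hT.
rewrite mulr0.
have : (Tv alpha beta c ysol (upd (cst M 0) i xb) + dC) * xb <= (ax - xb) * xb.
  apply: ler_wpM2r => //; move: hT; rewrite ea; lra.
have : (ax - xb) * xb <= 0 by apply: mulr_le0_ge0 => //; lra.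
lra.
Qed.
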